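(* Let $\Sigma:\ \dot x=-(A-M)x+d$ be $\gamma$-robust for some $\gamma>0$ and let $u=(A-M)^{-1}\mathbb{1}$. Let $a_{N+1}>0$ and define $\bar A=\begin{bmatrix}A&0\\0&a_{N+1}\end{bmatrix}$, $\bar M=\begin{bmatrix}M&0\\0&0\end{bmatrix}$ (adding node $N+1$ with no incoming or outgoing edges). Then the change $\Sigma\mapsto\bar\Sigma:\ \dot{\bar x}=-(\bar A-\bar M)\bar x+\bar d$ is scalable if and only if $a_{N+1}\ge\big(\max_{i\in\{1,\dots,N\}}u_i\big)^{-1}$.
   Context: $A=\mathrm{diag}(a_1,\dots,a_N)$ with all $a_i>0$, $M\in\mathbb{R}^{N\times N}$ has zero diagonal and nonnegative off-diagonal entries; $\mathbb{1}$ is the all-ones vector. For $\gamma>0$, a system $\dot x=-(A-M)x+d$ is $\gamma$-robust if $-(A-M)$ is Hurwitz and for every bounded disturbance $d$, the solution with $x(0)=0$ satisfies $\max_{i}|x_i(t)|\le\gamma\max_i\sup_{s\ge0}|d_i(s)|$ for all $t\ge0$. A structural change $\Sigma\mapsto\bar\Sigma$ is called scalable if, for every $\gamma>0$ for which $\Sigma$ is $\gamma$-robust, $\bar\Sigma$ is $\gamma$-robust. *)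

(* Defs.v *)
From HB Require Import structures.
From mathcomp Require Import all_boot all_order all_algebra.
From mathcomp Require Import all_classical all_reals all_analysis.
From mathcomp Require Import complex.
Set Implicit Arguments. Unset Strict Implicit. Unset Printing Implicit Defensive.
Import Order.TTheory GRing.Theory Num.Theory.
Import numFieldNormedType.Exports.
Local Open Scope ring_scope.
Local Open Scope classical_set_scope.

Section Defs.
Variable R : realType.

Definition hurwitz (n : nat) (H : 'M[R]_n) : Prop :=
  forall lam : R[i],
    root (map_poly (fun r : R => (r%:C)%C) (char_poly H)) lam ->
    complex.Re lam < 0.

Definition zero_state_solution (n : nat) (A M : 'M[R]_n)
    (d x : R -> 'cV[R]_n) : Prop :=
  x 0 = 0 /\
  x s @[s --> 0^'+] --> x 0 /\
  forall t : R, 0 < t -> is_derive t 1 x (- ((A - M) *m x t) + d t).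

(* The bound
   max_i |x_i(t)| <= gamma * max_i sup_{s>=0} |d_i(s)| is written out
   as: for every bound B of all |d_i(s)|, s >= 0, all |x_i(t)| are <= gamma*B. *)
Definition gamma_robust (n : nat) (A M : 'M[R]_n) (gamma : R) : Prop :=
  hurwitz (- (A - M)) /\
  forall (d x : R -> 'cV[R]_n), continuous d ->
    zero_state_solution A M d x ->
    forall B : R, (forall s i, 0 <= s -> `|d s i ord0| <= B) ->
    forall t i, 0 <= t -> `|x t i ord0| <= gamma * B.

Definition scalable_change (n m : nat) (A M : 'M[R]_n) (Ab Mb : 'M[R]_m) : Prop :=
  forall gamma : R, 0 < gamma -> gamma_robust A M gamma -> gamma_robust Ab Mb gamma.

End Defs.

(* Main.v *)
Require Import Defs.
From HB Require Import structures.
From mathcomp Require Import all_boot all_order all_algebra.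
From mathcomp Require Import all_classical all_reals all_analysis.
From mathcomp Require Import ring lra complex.
Import Order.TTheory GRing.Theory Num.Theory.
Import numFieldNormedType.Exports.
Local Open Scope ring_scope.
Local Open Scope classical_set_scope.

Section S.
Variable R : realType.
Lemma near_right_ex (x : R) (P : R -> Prop) :
  (\forall y \near x^'+, P y) -> exists2 e, 0 < e & forall y, x < y -> y < x + e -> P y.
Proof.
case=> e /= e0 He; exists e => // y xy ye; apply: He => //=.
rewrite ltr0_norm ?subr_lt0 // opprB; lra.
Qed.
Lemma near_ex (x : R) (P : R -> Prop) :
  (\forall y \near x, P y) -> exists2 e, 0 < e & forall y, `|y - x| < e -> P y.
Proof.
case=> e /= e0 He; exists e => // y ye; apply: He => /=.
by rewrite distrC.
Qed.

Lemma barrier (I : finType) (g : I -> R -> R) :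
  (forall k, 0 < g k 0) ->
  (forall k, g k s @[s --> 0^'+] --> g k 0) ->
  (forall k t, 0 < t -> {for t, continuous (g k)}) ->
  (forall t, 0 < t -> forall k, (forall j, 0 <= g j t) -> g k t = 0 ->
       exists2 D, 0 < D & is_derive t 1 (g k) D) ->
  forall t, 0 <= t -> forall k, 0 < g k t.
Proof.
move=> h0 hr hc hd.
pose S := [set t : R | 0 <= t /\ forall s, 0 <= s -> s <= t -> forall k, 0 < g k s].
suff HS : forall t, 0 <= t -> S t.
  by move=> t t0 k; case: (HS t t0) => _; apply => //.
move=> t1 t10; apply: contrapT => nS1.
have S0 : S 0.
  split => // s s0 s0' k; suff -> : s = 0 by [].
  by apply/eqP; rewrite eq_le s0 s0'.
have ubS : ubound S t1.
  move=> t [t0 Ht]; rewrite leNgt; apply/negP => t1t; apply: nS1; split => //.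
  by move=> s s0 st1; apply: Ht => //; apply: le_trans st1 (ltW t1t).
have hsS : has_sup S by split; [exists 0 | exists t1].
set t0 := sup S.
have [e e0 He] : exists2 e, 0 < e & forall s, 0 < s -> s < e -> forall k, 0 < g k s.
  have : \forall s \near 0^'+, forall k, 0 < g k s.
    by apply: filter_forall => k; exact: cvgr_gt (hr k) _ (h0 k).
  move/near_right_ex => [e e0 He]; exists e => // s s0 se; apply: He => //.
  by rewrite add0r.
have Se2 : S (e/2).
  split; first by lra.
  move=> s s0 se2 k; case: (ltgtP s 0) => [|s0'|->] //.
  - by move=> /lt_le_trans /(_ s0); rewrite ltxx.
  - by apply: He => //; lra.
have t0pos : 0 < t0.
  by apply: (@lt_le_trans _ _ (e/2)); [lra | exact: sup_upper_bound hsS _ Se2].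
have Hb : forall s, 0 <= s -> s < t0 -> forall k, 0 < g k s.
  move=> s s0 st0 k.
  have hts : 0 < t0 - s by rewrite subr_gt0.
  have [r [r0 Hr] rs] := sup_adherent hts hsS.
  apply: Hr => //; rewrite -/t0 in rs; apply: ltW; lra.
have Hc : forall k, 0 <= g k t0.
  move=> k; rewrite leNgt; apply/negP => gneg.
  have := hc k t0 t0pos; move/cvgr_lt => /(_ _ gneg).
  move/near_ex => [d d0 Hd].
  pose s := t0 - Num.min d t0 / 2.
  have hm1 : Num.min d t0 <= d by rewrite ge_min lexx.
  have hm2 : Num.min d t0 <= t0 by rewrite ge_min lexx orbT.
  have hm3 : 0 < Num.min d t0 by rewrite lt_min d0 t0pos.
  have := Hd s; rewrite /s.
  have -> : t0 - Num.min d t0 / 2 - t0 = - (Num.min d t0 / 2) by ring.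
  rewrite normrN gtr0_norm; last by lra.
  move=> /(_ ltac:(lra)); rewrite ltNge => /negP; apply.
  by apply/ltW/Hb; lra.
have [k gk0] : exists k, g k t0 = 0.
  apply: contrapT => nex.
  have Hpos : forall k, 0 < g k t0.
    move=> k; rewrite lt_neqAle Hc andbT eq_sym; apply/eqP => ?; apply: nex.
    by exists k.
  have : \forall s \near t0, forall k, 0 < g k s.
    apply: (@filter_forall R I (fun k s => 0 < g k s) (nbhs t0)) => k.
    by have := hc k t0 t0pos; move/cvgr_gt => /(_ _ (Hpos k)).
  move/near_ex => [d d0 Hd].
  have : S (t0 + d/2).
    split; first by lra.
    move=> s s0 sle k; case: (ltP s t0) => [st0|t0s]; first exact: Hb.
    apply: Hd; rewrite ger0_norm; lra.
  move/(sup_upper_bound hsS); rewrite -/t0; lra.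
have [D D0 hD] := hd t0 t0pos k Hc gk0.
have hcv : (fun h => h^-1 *: ((g k \o shift t0) (h *: 1) - g k t0)) @ 0^' --> D.
  by case: hD => hder hval; rewrite -hval; exact: hder.
move/cvgr_gt: hcv => /(_ _ D0); move/near_ex => [d d0 Hd].
pose h := - (Num.min d t0 / 2).
have hm1 : Num.min d t0 <= d by rewrite ge_min lexx.
have hm2 : Num.min d t0 <= t0 by rewrite ge_min lexx orbT.
have hm3 : 0 < Num.min d t0 by rewrite lt_min d0 t0pos.
have := Hd h; rewrite /h subr0 normrN gtr0_norm; last by lra.
move=> /(_ ltac:(lra)) /(_ ltac:(rewrite oppr_eq0; apply/negP => /eqP; lra)).
rewrite /= gk0 subr0 [_%:A]mulr1.
have hb := Hb (- (Num.min d t0 / 2) + t0) ltac:(lra) ltac:(lra) k.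
move: hb; set z := g k _ => hb H.
have Hn : (- (Num.min d t0 / 2))^-1 < 0 by rewrite invr_lt0; lra.
have : (- (Num.min d t0 / 2))^-1 * z < 0 by rewrite pmulr_llt0.
move: H; rewrite [_ *: _]/(_ * _) => H1 H2; by have := lt_trans H1 H2; rewrite ltxx.
Qed.
End S.

Section C.
Variable R : realType.

Lemma coord_cvg m n (T : Type) (F : set_system T) (FF : Filter F) (f : T -> 'M[R]_(m, n)) (l : 'M[R]_(m, n)) i j :
  f @ F --> l -> (fun s => f s i j) @ F --> l i j.
Proof.
move=> fl.
exact: (@continuous_cvg _ _ _ F FF f (fun M : 'M[R]_(m, n) => M i j) l (@coord_continuous R m n i j l) fl).
Qed.

Lemma coord_derive m n (x : R -> 'M[R]_(m, n)) (t : R) (D : 'M[R]_(m, n)) i j :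
  is_derive t (1 : R) x D -> is_derive t (1 : R) (fun s => x s i j) (D i j).
Proof.
case=> dx vx.
have dxij := (derivable_mxP x t 1).1 dx i j.
split => //.
by rewrite -vx (derive_mx dx) mxE.
Qed.
End C.
Section D.
Variable R : realType.
Lemma is_derive_aff (f : R -> R) (t Df a b : R) : is_derive t (1:R) f Df ->
  is_derive t (1:R) (fun s => a - b * f s) (- (b * Df)).
Proof.
move=> hf.
have h1 : is_derive t (1:R) (fun s => b *: f s) (b *: Df) by exact: is_deriveZ.
have h2 := @is_deriveB R R R (cst a) (fun s => b *: f s) t 1 0 (b *: Df) _ h1.
by rewrite sub0r in h2; exact: h2.
Qed.

Definition sgb (b : bool) : R := if b then 1 else -1.

Lemma comparison n (A M : 'M[R]_n) (u : 'cV[R]_n) (d x : R -> 'cV[R]_n) (B : R) :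
  (forall i j, i != j -> (A - M) i j <= 0) ->
  (forall i, 0 < u i ord0) ->
  (forall i, ((A - M) *m u) i ord0 = 1) ->
  zero_state_solution A M d x ->
  (forall s i, 0 <= s -> `|d s i ord0| <= B) ->
  forall t i, 0 <= t -> `|x t i ord0| <= B * u i ord0.
Proof.
move=> HZ upos Hu [x0 [xr xd]] dB t i t0.
set H := A - M in HZ Hu xd.
have B0 : 0 <= B by apply: le_trans (normr_ge0 _) (dB 0 i (lexx 0)).
suff He : forall e, 0 < e -> `|x t i ord0| < (B + e) * u i ord0.
  apply/ler_addgt0Pr => e e0.
  have ui := upos i.
  have := He (e / u i ord0) (divr_gt0 e0 ui).
  by rewrite mulrDl divfK ?gt_eqF // => /ltW.
move=> e e0.
pose c := B + e.
have c0 : 0 < c by rewrite /c; lra.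
pose g (kb : 'I_n * bool) (s : R) := c * u kb.1 ord0 - sgb kb.2 * x s kb.1 ord0.
have Hbar := @barrier R _ g.
have : forall kb, 0 < g kb t.
  move=> kb; apply: Hbar => //.
  - by case=> k b; rewrite /g x0 mxE mulr0 subr0; apply: mulr_gt0.
  - case=> k b; rewrite /g /=; apply: cvgB; first exact: cvg_cst.
    apply: cvgM; first exact: cvg_cst.
    exact: (@coord_cvg R _ _ _ _ _ _ _ k ord0 xr).
  - move=> [k b] s s0; rewrite /g /=.
    have hk := @coord_derive R _ _ _ _ _ k ord0 (xd s s0).
    have hcont : {for s, continuous (fun s => x s k ord0)}.
      case: hk => hder _; apply: differentiable_continuous.
      exact/derivable1_diffP.
    apply: cvgB; first exact: cvg_cst.
    by apply: cvgM; first exact: cvg_cst.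
  - move=> s s0 [k b] Hall; rewrite /g /= => gk0.
    have hk := @coord_derive R _ _ _ _ _ k ord0 (xd s s0).
    eexists; last exact: is_derive_aff hk.
    have hsg : `|sgb b| = 1 by rewrite /sgb; case: ifP; rewrite ?normrN normr1.
    have Hx : forall j, sgb b * x s j ord0 <= c * u j ord0.
      by move=> j; have := Hall (j, b); rewrite /g /= subr_ge0.
    have Hxk : sgb b * x s k ord0 = c * u k ord0 by apply/eqP; rewrite eq_sym -subr_eq0 gk0.
    have hsum : c <= sgb b * (H *m x s) k ord0.
      have -> : c = c * (H *m u) k ord0 by rewrite Hu mulr1.
      rewrite !mxE mulr_sumr mulr_sumr; apply: ler_sum => j _.
      rewrite mulrCA [sgb b * _]mulrCA.
      case: (eqVneq j k) => [->|jk]; first by rewrite Hxk.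
      apply: ler_wnM2l; first by apply: HZ; rewrite eq_sym.
      exact: Hx.
    have hd : sgb b * d s k ord0 <= B.
      apply: le_trans (dB s k (ltW s0)).
      by apply: le_trans (ler_norm _) _; rewrite normrM hsg mul1r.
    rewrite [X in - (_ * X)]mxE [X in - (_ * (X + _))]mxE mulrDr mulrN.
    rewrite /c in hsum; lra.
move=> Hg.
have := Hg (i, true); have := Hg (i, false); rewrite /g /sgb /=.
rewrite ltr_norml /c; move=> h1 h2; apply/andP; split; lra.
Qed.
End D.

Section E.
Variable R : realType.

Lemma is_derive_expRlin (a t : R) :
  is_derive t (1:R) (fun s => expR (a * s)) (a * expR (a * t)).
Proof.
have hg : is_derive t (1:R) (fun s : R => a * s) a.
  have := @is_deriveZ R R R id a t 1 1 (is_derive_id _ _).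
  by rewrite /GRing.scale /= mulr1.
have dg : differentiable (fun s : R => a * s) t.
  by apply/derivable1_diffP; case: hg.
have de : differentiable (@expR R) (a * t).
  by apply/derivable1_diffP; exact: derivable_expR.
have dc : derivable (expR \o (fun s : R => a * s)) t 1.
  by apply/derivable1_diffP; exact: differentiable_comp.
apply: DeriveDef => //.
have hc := @derive1_comp R (fun s : R => a * s) expR t.
rewrite !derive1E in hc.
rewrite [LHS]hc; last by apply/derivable1_diffP.
  by case: (is_derive_expR (a * t)) => _ ->; case: hg => _ ->; rewrite mulrC.
by case: hg.
Qed.

Lemma mx_is_derive m n (X : R -> 'M[R]_(m, n)) (t : R) (D : 'M[R]_(m, n)) :
  (forall i j, is_derive t (1:R) (fun s => X s i j) (D i j)) ->
  is_derive t (1:R) X D.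
Proof.
move=> hij.
have dX : derivable X t 1 by apply/derivable_mxP => i j; case: (hij i j).
apply: DeriveDef => //; rewrite derive_mx //.
by apply/matrixP => i j; rewrite mxE; case: (hij i j).
Qed.


Lemma cont_expRlin (a : R) : continuous (fun s : R => expR (a * s)).
Proof.
move=> s; have [hd _] := is_derive_expRlin a s.
by apply: differentiable_continuous; apply/derivable1_diffP.
Qed.

Lemma step1 n (A M : 'M[R]_n) (gamma K : R) (v : 'cV[R]_n) i (eps T C : R) :
  gamma_robust A M gamma -> (forall j, `|((A - M) *m v) j ord0| <= K) ->
  (forall j, `|v j ord0| <= C) -> 0 < eps -> 0 <= T ->
  (1 - expR (- eps * T)) * `|v i ord0| <= gamma * (eps * C + K).
Proof.
case=> _ Hrob Hw vC e0 T0.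
set w := (A - M) *m v in Hw.
pose phi s := 1 - expR (- eps * s).
pose dphi s := eps * expR (- eps * s).
pose x s := phi s *: v.
pose d s := dphi s *: v + phi s *: w.
have hE : forall s, 0 <= s -> 0 < expR (- eps * s) <= 1.
  move=> s s0; rewrite expR_gt0 expR_le1 mulNr oppr_le0.
  exact: mulr_ge0 (ltW e0) s0.
have cphi : continuous phi.
  by move=> s; apply: cvgB; [exact: cvg_cst | exact: cont_expRlin].
have dphiE : forall t, is_derive t (1:R) phi (dphi t).
  move=> t.
  have -> : phi = (fun s => 1 - 1 * expR (- eps * s)).
    by apply/funext => s; rewrite mul1r.
  have h := @is_derive_aff R _ t _ 1 1 (is_derive_expRlin (- eps) t).
  apply: (is_derive_eq h).
  by rewrite /dphi; ring.
suff : `|x T i ord0| <= gamma * (eps * C + K).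
  rewrite /x mxE normrM ger0_norm //.
  by have := hE T T0; rewrite /phi; lra.
apply: (Hrob d x _ _ (eps * C + K) _ T i T0).
- move=> s; apply: cvgD; apply: continuousZr_tmp => //.
  by apply: cvgM; [exact: cvg_cst | exact: cont_expRlin].
  exact: cphi.
- split; first by rewrite /x /phi mulr0 expR0 subrr scale0r.
  split.
    by apply: (@cvg_at_right_filter R _ x 0); apply: continuousZr_tmp; exact: cphi.
  move=> t t0.
  have -> : - ((A - M) *m x t) + d t = dphi t *: v.
    by rewrite /d /x -scalemxAr -/w addrC addrK.
  apply: mx_is_derive => p q; rewrite mxE.
  have -> : (fun s => x s p q) = (v p q) \*: phi.
    by apply/funext => s; rewrite /x mxE mulrC.
  rewrite mulrC; apply: is_deriveZ; exact: dphiE.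
- move=> s j s0.
  have -> : (d s) j ord0 = dphi s * v j ord0 + phi s * w j ord0 by rewrite /d !mxE.
  apply: le_trans (ler_normD _ _) _.
  rewrite !normrM /dphi /phi.
  have := hE s s0; set E := expR _ => /andP [E0 E1].
  rewrite (ger0_norm (ltW e0)) (ger0_norm (ltW E0)) (ger0_norm (_ : 0 <= 1 - E)); last by lra.
  have hv := vC j; have hw := Hw j.
  have hv0 := normr_ge0 (v j ord0); have hw0 := normr_ge0 (w j ord0).
  have h1 : E * `|v j ord0| <= C by nra.
  have h2 : (1 - E) * `|w j ord0| <= K by nra.
  have h3 : eps * E * `|v j ord0| <= eps * C by rewrite -mulrA; nra.
  lra.
Qed.

Lemma lowerL n (A M : 'M[R]_n) (gamma K : R) (v : 'cV[R]_n) i :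
  gamma_robust A M gamma -> 0 < gamma -> (forall j, `|((A - M) *m v) j ord0| <= K) ->
  `|v i ord0| <= gamma * K.
Proof.
move=> Hr g0 Hw.
pose C := \sum_j `|v j ord0|.
have vC : forall j, `|v j ord0| <= C.
  move=> j; rewrite /C (bigD1 j) //= lerDl; apply: sumr_ge0 => k _; exact: normr_ge0.
have C0 : 0 <= C := le_trans (normr_ge0 _) (vC i).
have S2 : forall S, 0 <= S -> (1 - expR (- S)) * `|v i ord0| <= gamma * K.
  move=> S S0; apply/ler_addgt0Pr => e e0.
  pose eps := e / (gamma * (C + 1)).
  have gC : 0 < gamma * (C + 1) by apply: mulr_gt0 => //; lra.
  have eps0 : 0 < eps by rewrite /eps divr_gt0.
  have := @step1 n A M gamma K v i eps (S / eps) C Hr Hw vC eps0 (divr_ge0 S0 (ltW eps0)).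
  rewrite mulNr [eps * _]mulrC divfK ?gt_eqF //.
  have h : gamma * eps * (C + 1) = e.
    by rewrite /eps; field; rewrite !gt_eqF //; lra.
  have hge : 0 <= gamma * eps by apply: mulr_ge0; apply: ltW.
  move=> H; lra.
apply/ler_addgt0Pr => e e0.
pose S := `|v i ord0| / e.
have S0 : 0 <= S by rewrite /S divr_ge0 // ltW.
have := S2 S S0.
have hx : expR (- S) * (1 + S) <= 1.
  rewrite expRN mulrC ler_pdivrMr ?expR_gt0 // mul1r; exact: expR_ge1Dx.
have hv : `|v i ord0| = S * e by rewrite /S divfK ?gt_eqF.
have E0 := expR_ge0 (- S).
have hEV : expR (- S) * `|v i ord0| <= e by rewrite hv; nra.
move=> H; lra.
Qed.
End E.
Section F.
Variable R : realType.
Lemma eval_charpoly n (X : 'M[R]_n) (s : R) : (char_poly X).[s] = \det (s%:M - X).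
Proof.
rewrite /char_poly -horner_evalE -det_map_mx /char_poly_mx map_mxB map_scalar_mx /=.
rewrite horner_evalE hornerX -map_mx_comp; congr (\det (_ - _)).
by apply/matrixP => i j; rewrite !mxE /= horner_evalE hornerC.
Qed.

Lemma hurwitz_det n (X : 'M[R]_n) (s : R) : hurwitz X -> 0 <= s -> \det (s%:M - X) != 0.
Proof.
move=> hX s0; apply/negP => /eqP d0.
have hr : root (char_poly X) s by rewrite /root eval_charpoly d0.
have := hX (s%:C)%C.
rewrite fmorph_root => /(_ hr) /=; lra.
Qed.
End F.

Section G.
Variable R : realType.

Lemma bigmin_le_ (I : finType) (F : I -> R) j : \big[Num.min/1]_i F i <= F j.
Proof. by rewrite (bigD1 j) //= ge_min lexx. Qed.

Lemma bigmin_cases (I : finType) (F : I -> R) :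
  \big[Num.min/1]_i F i = 1 \/ exists k, \big[Num.min/1]_i F i = F k.
Proof.
apply: (big_ind (fun x => x = 1 \/ exists k, x = F k)); first by left.
- move=> x y hx hy; rewrite minEle; case: leP => _; [exact: hx|exact: hy].
- by move=> k _; right; exists k.
Qed.

Lemma bigmin_gt0 (I : finType) (F : I -> R) : (forall i, 0 < F i) -> 0 < \big[Num.min/1]_i F i.
Proof.
move=> h; apply: (big_ind (fun x => 0 < x)) => //.
by move=> x y hx hy; rewrite lt_min hx hy.
Qed.

Lemma cont_bigmin (I : finType) (F : I -> R -> R) (s : R) :
  (forall i, {for s, continuous (F i)}) ->
  {for s, continuous (fun t => \big[Num.min/1]_i F i t)}.
Proof.
move=> hc.
have : forall r : seq I, {for s, continuous (fun t => \big[Num.min/1]_(i <- r) F i t)}.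
  elim=> [|j r IH].
    have -> : (fun t => \big[Num.min/1]_(i <- [::]) F i t) = cst 1.
      by apply/funext => t; rewrite big_nil.
    exact: cvg_cst.
  have -> : (fun t => \big[Num.min/1]_(i <- j :: r) F i t) =
     (F j) \min (fun t => \big[Num.min/1]_(i <- r) F i t).
    by apply/funext => t; rewrite big_cons.
  exact: (continuous_min (hc j) IH).
by apply.
Qed.

Lemma u_pos N (a : 'rV[R]_N) (M : 'M[R]_N) :
  (forall i, 0 < a ord0 i) -> (forall i j, 0 <= M i j) ->
  hurwitz (- (diag_mx a - M)) ->
  forall i, 0 < (invmx (diag_mx a - M) *m (const_mx 1 : 'cV[R]_N)) i ord0.
Proof.
move=> apos Mpos hX.
set H := diag_mx a - M in hX *.
have detne : forall s, 0 <= s -> \det (s%:M + H) != 0.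
  by move=> s s0; have := @hurwitz_det R _ _ s hX s0; rewrite opprK.
pose Qm : 'M[{poly R}]_N := 'X%:M + map_mx polyC H.
have mapQ : forall s, map_mx (horner_eval s) Qm = s%:M + H.
  move=> s; rewrite map_mxD map_scalar_mx /= horner_evalE hornerX -map_mx_comp.
  congr (_ + _); apply/matrixP => i j; rewrite !mxE /=.
  by rewrite horner_evalE hornerC.
pose W s := (\det (s%:M + H))^-1 *: (\adj (s%:M + H) *m (const_mx 1 : 'cV[R]_N)).
have Weq : forall s, 0 <= s -> forall k, ((s%:M + H) *m W s) k ord0 = 1.
  move=> s s0 k; rewrite /W -scalemxAr mulmxA mul_mx_adj mul_scalar_mx scalerA.
  by rewrite mulVf ?detne // scale1r mxE.
have Wentry : forall s k, W s k ord0 = (\sum_l (\adj Qm) k l).[s] * ((\det Qm).[s])^-1.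
  move=> s k; rewrite /W mxE mulrC; congr (_ * _).
    rewrite mxE horner_sum; apply: eq_bigr => l _.
    by rewrite [const_mx 1 l ord0]mxE mulr1 -[s%:M + H]mapQ -map_mx_adj mxE.
  by rewrite -[s%:M + H]mapQ det_map_mx.
have rowE : forall s (V : 'cV[R]_N) k,
    ((s%:M + H) *m V) k ord0 = (s + a ord0 k) * V k ord0 - \sum_j M k j * V j ord0.
  move=> s V k; rewrite mulmxDl mul_scalar_mx mulmxBl mul_diag_mx !mxE.
  ring.
have Zrow : forall s (V : 'cV[R]_N) k, (forall j, ((s%:M + H) *m V) j ord0 = 1) ->
    (forall j, V k ord0 <= V j ord0) -> V k ord0 <= 0 ->
    1 <= (s + a ord0 k - \sum_j M k j) * V k ord0.
  move=> s V k hV hmin hk; rewrite -(hV k) rowE mulrBl mulr_suml.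
  rewrite lerD2l lerN2; apply: ler_sum => j _.
  by apply: ler_wpM2l.
pose S := \sum_k \sum_j M k j.
have rS : forall k, \sum_j M k j <= S.
  move=> k; rewrite /S [X in _ <= X](bigD1 k) //= lerDl; apply: sumr_ge0 => l _.
  by apply: sumr_ge0 => j _.
have S0 : 0 <= S.
  by apply: sumr_ge0 => l _; apply: sumr_ge0 => j _.
have WS : forall k, 0 < W S k ord0.
  move=> k0; pose F := fun j => W S j ord0.
  case: (@bigmin_cases _ F) => [h1|[k hk]].
    by apply: lt_le_trans (@bigmin_le_ _ F k0); rewrite h1 ltr01.
  suff Fk : 0 < F k by apply: lt_le_trans Fk _; rewrite -hk; exact: bigmin_le_.
  rewrite ltNge; apply/negP => hk0.
  have := Zrow S (W S) k (Weq S S0) (fun j => ltac:(rewrite -/(F k) -hk; exact: bigmin_le_)) hk0.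
  have := rS k; have := apos k; rewrite -/(F k) => h1 h2; nra.
move=> i.
have u_eq : invmx H *m const_mx 1 = W 0.
  rewrite /invmx unitmxE unitfE /W.
  have -> : (0 : R)%:M + H = H by rewrite -scalemx1 scale0r add0r.
  have := detne 0 (lexx 0).
  have -> : (0 : R)%:M + H = H by rewrite -scalemx1 scale0r add0r.
  by move=> ->; rewrite scalemxAl.
rewrite u_eq ltNge; apply/negP => hi.
pose g s := \big[Num.min/1]_j W s j ord0.
have gc : {within `[0, S], continuous g}.
  apply: continuous_in_subspaceT => s; rewrite inE /= in_itv /= => /andP [s0 _].
  apply: cont_bigmin => j.
  have -> : (fun t => W t j ord0) =
      (fun t => (\sum_l (\adj Qm) j l).[t] * ((\det Qm).[t])^-1).
    by apply/funext => t; rewrite Wentry.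
  apply: continuousM; first exact: continuous_horner.
  apply: continuousV; last exact: continuous_horner.
  by rewrite -horner_evalE -det_map_mx mapQ detne.
have g0 : g 0 <= 0 := le_trans (@bigmin_le_ _ _ i) hi.
have gS : 0 < g S := @bigmin_gt0 _ _ WS.
have hv : Num.min (g 0) (g S) <= 0 <= Num.max (g 0) (g S).
  by rewrite ge_min le_max g0 (ltW gS) orbT.
have [c cI gc0] := IVT S0 gc hv.
have c0 : 0 <= c by move: cI; rewrite in_itv /= => /andP [].
case: (@bigmin_cases _ (fun j => W c j ord0)) => [h1|[k hk]].
  by move: gc0; rewrite /g h1 => /eqP; rewrite oner_eq0.
have Wk0 : W c k ord0 = 0 by rewrite -hk.
have := Zrow c (W c) k (Weq c c0) (fun j => ltac:(rewrite -hk; exact: bigmin_le_)).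
by rewrite Wk0 mulr0 lexx => /(_ isT); rewrite ler10.
Qed.
End G.

Section Hs.
Variable R : realType.

Lemma hurwitz_block N (X : 'M[R]_N) (c : R) : hurwitz X -> 0 < c ->
  hurwitz (block_mx X 0 0 (- c)%:M : 'M[R]_(N + 1)).
Proof.
move=> hX c0 lam.
rewrite /char_poly char_block_diag_mx det_ublock rmorphM rootM => /orP [].
  exact: hX.
rewrite det_mx11 !mxE /= mulr1n.
rewrite rmorphB /= map_polyX map_polyC /= /root hornerD hornerN hornerX hornerC.
rewrite subr_eq0 => /eqP ->.
rewrite /=; lra.
Qed.
End Hs.

Local Close Scope classical_set_scope.

Theorem mainTheorem6 (R : realType) (N : nat) (a : 'rV[R]_N) (M : 'M[R]_N)
  (aN1 gamma : R) :
  (0 < N)%N ->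
  (forall i, 0 < a ord0 i) ->
  (forall i, M i i = 0) ->
  (forall i j, 0 <= M i j) ->
  0 < gamma ->
  gamma_robust (diag_mx a) M gamma ->
  0 < aN1 ->
  let u := invmx (diag_mx a - M) *m (const_mx 1 : 'cV[R]_N) in
  scalable_change (diag_mx a) M
    (block_mx (diag_mx a) 0 0 (aN1%:M : 'M[R]_1))
    (block_mx M 0 0 (0 : 'M[R]_1))
  <-> (\big[Num.max/0]_(i < N) u i ord0)^-1 <= aN1.
Proof.
move=> N0 apos Mdiag Mpos g0 Hrob aN0 u.
set H := diag_mx a - M.
have hX : hurwitz (- H) by case: Hrob.
have upos : forall i, 0 < u i ord0 := @u_pos R N a M apos Mpos hX.
have Hunit : H \in unitmx.
  rewrite unitmxE unitfE.
  have := @hurwitz_det R _ _ 0 hX (lexx 0).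
  by rewrite opprK -scalemx1 scale0r add0r.
have Hu : forall i, (H *m u) i ord0 = 1.
  by move=> i; rewrite /u mulmxA mulmxV // mul1mx mxE.
have HZ : forall i j, i != j -> H i j <= 0.
  move=> i j ij; rewrite /H !mxE (negPf ij) mulr0n sub0r oppr_le0; exact: Mpos.
set m := \big[Num.max/0]_(i < N) u i ord0.
have um : forall i, u i ord0 <= m.
  by move=> i; rewrite /m (bigD1 i) //= le_max lexx.
have m0 : 0 < m.
  by apply: lt_le_trans (upos (Ordinal N0)) (um _).
have mle : forall g, 0 <= g -> (forall i, u i ord0 <= g) -> m <= g.
  move=> g g0' hg; rewrite /m; apply: (big_ind (fun x => x <= g)) => //.
  by move=> x y hx hy; rewrite ge_max hx hy.
have robust_m : forall g, m <= g -> gamma_robust (diag_mx a) M g.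
  move=> g mg; split => // d x dc sol B hB t i t0.
  have B0 : 0 <= B := le_trans (normr_ge0 _) (hB 0 i (lexx 0)).
  apply: le_trans (@comparison R _ _ _ _ _ _ _ HZ upos Hu sol hB t i t0) _.
  by rewrite mulrC ler_wpM2r // (le_trans (um i) mg).
set Ab := block_mx (diag_mx a) 0 0 (aN1%:M : 'M[R]_1).
set Mb := block_mx M 0 0 (0 : 'M[R]_1).
have HbE : Ab - Mb = block_mx H 0 0 (aN1%:M : 'M[R]_1).
  by rewrite /Ab /Mb opp_block_mx add_block_mx !subr0.
pose ub : 'cV[R]_(N + 1) := col_mx u (const_mx aN1^-1).
have ubpos : forall i, 0 < ub i ord0.
  move=> i; case: (split_ordP i) => k ->; rewrite /ub ?col_mxEu ?col_mxEd //.
  by rewrite mxE invr_gt0.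
have Hub : forall i, ((Ab - Mb) *m ub) i ord0 = 1.
  move=> i; rewrite HbE /ub mul_block_col !mul0mx addr0 add0r.
  case: (split_ordP i) => k ->; rewrite ?col_mxEu ?col_mxEd //.
  by rewrite mul_scalar_mx mxE mxE mulfV ?gt_eqF.
have HZb : forall i j, i != j -> (Ab - Mb) i j <= 0.
  move=> i j; rewrite HbE.
  case: (split_ordP i) => k ->; case: (split_ordP j) => l ->.
  - by rewrite block_mxEul => kl; apply: HZ; apply: contraNneq kl => ->.
  - by rewrite block_mxEur mxE.
  - by rewrite block_mxEdl mxE.
  - by rewrite !ord1 eqxx.
have hXb : hurwitz (- (Ab - Mb)).
  rewrite HbE opp_block_mx !oppr0.
  have -> : - (aN1%:M : 'M[R]_1) = (- aN1)%:M.
    by apply/matrixP => i j; rewrite !mxE mulNrn.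
  exact: (@hurwitz_block R N (- H) aN1 hX aN0).
have robust_b : forall g, m <= g -> aN1^-1 <= g -> gamma_robust Ab Mb g.
  move=> g mg ag; split => // d x dc sol B hB t i t0.
  have B0 : 0 <= B := le_trans (normr_ge0 _) (hB 0 i (lexx 0)).
  apply: le_trans (@comparison R _ _ _ _ _ _ _ HZb ubpos Hub sol hB t i t0) _.
  rewrite mulrC ler_wpM2r //.
  case: (split_ordP i) => k ->; rewrite /ub ?col_mxEu ?col_mxEd.
    exact: le_trans (um k) mg.
  by rewrite mxE.
split.
- move=> Hs.
  have := Hs m m0 (robust_m m (lexx m)).
  move=> /(@lowerL R _ _ _ m 1 ub (rshift N (ord0 : 'I_1))).
  move=> /(_ m0 (fun j => ltac:(by rewrite Hub normr1))).
  rewrite /ub col_mxEd mxE mulr1 ger0_norm; last by rewrite invr_ge0 ltW.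
  move=> h.
  by rewrite -[aN1]invrK lef_pV2 ?posrE ?invr_gt0.
- move=> hm g gpos Hg.
  have mg : m <= g.
    apply: mle; first exact: ltW.
    move=> i; have := @lowerL R _ _ _ g 1 u i Hg gpos (fun j => ltac:(by rewrite Hu normr1)).
    by rewrite mulr1; apply: le_trans (ler_norm _).
  apply: robust_b => //; apply: le_trans mg.
  by rewrite -[m]invrK lef_pV2 ?posrE ?invr_gt0.
Qed.
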